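(* Let $L>0$, $D\subseteq\mathbb{R}$ compact, and let $w$ be a null sequence. Let $\mathcal{M}_w$ be a set of filters of the form $M_h^T$, where $T$ is a convergent input-dependent CPTP map on some number $n$ of qubits and $h:\mathcal{D}(\mathbb{C}^{2^n})\to\mathbb{R}$, each of which is a $w$-fading memory filter, and let $\mathcal{F}_w$ be the family of corresponding $w$-fading memory functionals $F_h^T$ on $K_L^-(D)$. If $\mathcal{F}_w$ is a (polynomial) subalgebra of $C(K_L^-(D),\|\cdot\|_w)$ (closed under sums, real scalar multiples and products), contains the constant functionals, and separates points of $K_L^-(D)$, then $\mathcal{F}_w$ is dense in $C(K_L^-(D),\|\cdot\|_w)$ (with respect to the supremum norm). That is, for any $w$-fading memory (time-invariant, causal) filter $M_*:K_L(D)\to\mathbb{R}^{\mathbb{Z}}$ and any $\epsilon>0$, there exists $M_h^T\in\mathcal{M}_w$ such that for all $u\in K_L(D)$, $\sup_{k\in\mathbb{Z}}|M_*(u)_k-M_h^T(u)_k|<\epsilon$.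
   Context: $K_L(D)$: real sequences $u=\{u_k\}_{k\in\mathbb{Z}}$ with $u_k\in D\cap[-L,L]$; $K_L^-(D)$: such sequences indexed by $\mathbb{Z}^-=\{\dots,-1,0\}$. An input-dependent CPTP map $T$ on $n$ qubits assigns to each $x\in D\cap[-L,L]$ a CPTP map $T(x)$ on $2^n\times2^n$ matrices; it is convergent w.r.t. $K_L(D)$ if there is $\delta_k\to0$ such that for every input $\{u_k\}_{k\ge1}$ in $D\cap[-L,L]$ and any two density-operator sequences with $\rho_{j,k}=T(u_k)\rho_{j,k-1}$, $\|\rho_{1,k}-\rho_{2,k}\|_2\le\delta_k$ (Schatten 2-norm). The induced filter is $M_h^T(u)_k=h\big(\lim_{N\to\infty}T(u_k)T(u_{k-1})\cdots T(u_{k-N})\rho_{-N}\big)$, assumed independent of the initial density operators. A filter $M:K_L(D)\to\mathbb{R}^{\mathbb{Z}}$ is causal if $M(u)_k=M(v)_k$ whenever $u_j=v_j$ for all $j\le k$, and time-invariant if it commutes with the shifts $(M_\tau u)_k=u_{k-\tau}$. Its corresponding functional is $F(u_-)=M(u)_0$ for $u_-\in K_L^-(D)$ and any $u\in K_L(D)$ agreeing with $u_-$ on $\mathbb{Z}^-$; the filter is recovered by $M(u)_k=F(P\circ M_{-k}(u))$, with $P$ truncation to indices $\le0$. A null sequence is a decreasing $w:\{0,1,2,\dots\}\to(0,1]$ with $w_k\to0$; the weighted norm is $\|u\|_w=\sup_{k\in\mathbb{Z}^-}|u_k|w_{-k}$. A time-invariant causal filter is $w$-fading memory iff its functional is continuous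 on $(K_L^-(D),\|\cdot\|_w)$; $C(K_L^-(D),\|\cdot\|_w)$ denotes the real-valued continuous functionals on this space. *)

(* Defs.v *)
From mathcomp Require Import all_boot all_order all_algebra.
From mathcomp Require Import all_classical all_reals all_analysis.
From mathcomp Require Import complex mxtens.

Set Implicit Arguments.
Unset Strict Implicit.
Unset Printing Implicit Defensive.

Import Order.TTheory GRing.Theory Num.Theory.
Import numFieldNormedType.Exports.
Local Open Scope classical_set_scope.
Local Open Scope ring_scope.

Section QRC.
Variable R : realType.

Definition adjmx {m n : nat} (A : 'M[R[i]]_(m, n)) : 'M[R[i]]_(n, m) :=
  (map_mx (@Num.conj _) A)^T.

(* positive semidefinite: v^* A v is a nonnegative real for every v
   (in the ordered field R[i], 0 <= z means z real and z >= 0) *)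
Definition psdmx {N : nat} (A : 'M[R[i]]_N) : Prop :=
  forall v : 'cV[R[i]]_N, 0 <= (adjmx v *m A *m v) 0 0.

Definition is_density {N : nat} (A : 'M[R[i]]_N) : Prop :=
  [/\ adjmx A = A, psdmx A & \tr A = 1].

Definition hs_norm {N : nat} (A : 'M[R[i]]_N) : R :=
  Num.sqrt (\sum_(i < N) \sum_(j < N) (ComplexField.Normc.normc (A i j)) ^+ 2).

(* (id_m (x) T) acting on m*N x m*N matrices viewed as m x m blocks of N x N matrices *)
Definition ampliate {N : nat} (m : nat) (T : 'M[R[i]]_N -> 'M[R[i]]_N)
  (X : 'M[R[i]]_(m * N)) : 'M[R[i]]_(m * N) :=
  \matrix_(i, j)
    (let ab := mxtens_unindex i in let cd := mxtens_unindex j in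
     T (\matrix_(b, d) X (mxtens_index (ab.1, b)) (mxtens_index (cd.1, d)))
       ab.2 cd.2).

Definition cptp {N : nat} (T : 'M[R[i]]_N -> 'M[R[i]]_N) : Prop :=
  [/\ (forall (a : R[i]) (X Y : 'M[R[i]]_N), T (a *: X + Y) = a *: T X + T Y),
      (forall X, \tr (T X) = \tr X) &
      (forall (m : nat) (X : 'M[R[i]]_(m * N)), psdmx X -> psdmx (ampliate T X))].

Definition inDL (D : set R) (L : R) (x : R) : Prop := D x /\ `|x| <= L.

Definition in_K (D : set R) (L : R) (u : int -> R) : Prop := forall k, inDL D L (u k).

(* K_L^-(D): a left-infinite sequence (u_k)_{k <= 0} is represented by
   v : nat -> R with v n = u_{-n} *)
Definition in_Kneg (D : set R) (L : R) (v : nat -> R) : Prop := forall n, inDL D L (v n).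

Definition input_cptp {N : nat} (D : set R) (L : R)
  (T : R -> 'M[R[i]]_N -> 'M[R[i]]_N) : Prop :=
  forall x, inDL D L x -> cptp (T x).

Definition convergent {N : nat} (D : set R) (L : R)
  (T : R -> 'M[R[i]]_N -> 'M[R[i]]_N) : Prop :=
  input_cptp D L T /\
  exists delta : nat -> R, delta @ \oo --> 0 /\
    forall (u : nat -> R) (rho1 rho2 : nat -> 'M[R[i]]_N),
      (forall k, (0 < k)%N -> inDL D L (u k)) ->
      is_density (rho1 0%N) -> is_density (rho2 0%N) ->
      (forall k, rho1 k.+1 = T (u k.+1) (rho1 k)) ->
      (forall k, rho2 k.+1 = T (u k.+1) (rho2 k)) ->
      forall k, (0 < k)%N -> hs_norm (rho1 k - rho2 k) <= delta k.

(* chain T u k N X = T(u_k) T(u_{k-1}) ... T(u_{k-N}) X *)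
Fixpoint chain {N : nat} (T : R -> 'M[R[i]]_N -> 'M[R[i]]_N) (u : int -> R)
  (k : int) (n : nat) (X : 'M[R[i]]_N) : 'M[R[i]]_N :=
  match n with
  | 0%N => T (u k) X
  | n'.+1 => chain T u k n' (T (u (k - n'.+1%:Z)) X)
  end.

Definition mx_cvg {N : nat} (s : nat -> 'M[R[i]]_N) (l : 'M[R[i]]_N) : Prop :=
  forall e : R, 0 < e -> exists n0 : nat, forall n, (n0 <= n)%N -> hs_norm (s n - l) < e.

(* filters K_L(D) -> R^Z (represented as total functions; only values on K_L(D) matter) *)
Definition filterR := (int -> R) -> (int -> R).

(* M is the filter M_h^T induced by T and h: for every input in K_L(D), every time k
   and every choice of initial density operators rho_{-N}, the limit
   lim_N T(u_k)...T(u_{k-N}) rho_{-N} exists and M(u)_k = h(limit)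
   (in particular, independent of the initial density operators). *)
Definition induced_filter {N : nat} (D : set R) (L : R)
  (T : R -> 'M[R[i]]_N -> 'M[R[i]]_N) (h : 'M[R[i]]_N -> R) (M : filterR) : Prop :=
  forall u, in_K D L u -> forall (k : int) (rho : nat -> 'M[R[i]]_N),
    (forall n, is_density (rho n)) ->
    exists sigma, mx_cvg (fun n => chain T u k n (rho n)) sigma /\ M u k = h sigma.

Definition shift (tau : int) (u : int -> R) : int -> R := fun k => u (k - tau).

Definition time_invariant (D : set R) (L : R) (M : filterR) : Prop :=
  forall u, in_K D L u -> forall tau k, M (shift tau u) k = shift tau (M u) k.

Definition causal (D : set R) (L : R) (M : filterR) : Prop :=
  forall u v, in_K D L u -> in_K D L v ->
    forall k, (forall j, j <= k -> u j = v j) -> M u k = M v k.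

Definition extZ (v : nat -> R) : int -> R :=
  fun k => if k <= 0 then v (absz k) else v 0%N.

Definition functional (M : filterR) : (nat -> R) -> R := fun v => M (extZ v) 0.

Definition null_sequence (w : nat -> R) : Prop :=
  [/\ (forall n, 0 < w n <= 1), (forall n, w n.+1 <= w n) & w @ \oo --> 0].

Definition wnorm (w : nat -> R) (v : nat -> R) : R :=
  sup (range (fun n => `|v n| * w n)).

Definition w_continuous (D : set R) (L : R) (w : nat -> R) (F : (nat -> R) -> R) : Prop :=
  forall v, in_Kneg D L v -> forall e : R, 0 < e -> exists2 d : R, 0 < d &
    forall v', in_Kneg D L v' -> wnorm w (fun n => v n - v' n) < d ->
      `|F v - F v'| < e.

Definition w_fading_memory (D : set R) (L : R) (w : nat -> R) (M : filterR) : Prop :=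
  [/\ time_invariant D L M, causal D L M & w_continuous D L w (functional M)].

(* the family of functionals corresponding to a family of filters
   (functionals are identified by their values on K_L^-(D)) *)
Definition functionals_of (D : set R) (L : R) (Mw : set filterR) : set ((nat -> R) -> R) :=
  [set F | exists2 M, Mw M & forall v, in_Kneg D L v -> F v = functional M v].

End QRC.

(* Main.v *)
From HB Require Import structures.
Require Import Defs.
From mathcomp Require Import all_boot all_order all_algebra.
From mathcomp Require Import all_classical all_reals all_analysis.
From mathcomp Require Import complex mxtens.
From mathcomp Require Import zify ring lra.
From mathcomp Require finmap.
Import Order.TTheory GRing.Theory Num.Theory.
Import numFieldNormedType.Exports.
Local Open Scope classical_set_scope.
Local Open Scope ring_scope.

Definition PT (R : realType) : Type := nat -> R.
HB.instance Definition _ (R : realType) := Topological.copy (PT R) (@prod_topology nat (fun _ => numFieldTopology.Real_sort__canonical__topology_structure_Topological R)).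
HB.instance Definition _ (R : realType) := isPointed.Build (PT R) (fun _ => 0%R).

Lemma Kcompact (R : realType) (A : set R) : compact A -> compact ([set f | forall i, A (f i)] : set (PT R)).
Proof. move=> cA. have := (@tychonoff nat (fun _ => _) (fun _ => A) (fun _ => cA)). exact. Qed.

Lemma proj_cont (R : realType) (n : nat) : continuous (fun f : PT R => f n).
Proof. exact: (@proj_continuous nat (fun _ => _) n). Qed.

Definition qseq {R : realType} (X : R) (n : nat) : R := iter n (fun q => q + (X - q ^+ 2) / 2) 0.

Lemma qseq_inv (R : realType) (s : R) (n : nat) : 0 <= s <= 1 ->
  let q := qseq (s ^+ 2) n in 0 <= q <= s /\ (s - q) * (1 + n%:R * s / 2) <= s.
Proof.
case/andP => s0 s1; elim: n => [|n IH] /=.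
  rewrite /qseq /= mul0r; split; [by rewrite lexx | lra].
set q := qseq (s ^+ 2) n in IH *.
case: IH => /andP[q0 qs] H.
set e := s - q.
have e0 : 0 <= e by rewrite subr_ge0.
have n0 : 0 <= n%:R :> R by [].
have -> : n.+1%:R = n%:R + 1 :> R by rewrite -addn1 natrD.
have hq : s - (q + (s ^+ 2 - q ^+ 2) / 2) = e * (1 - (s + q) / 2) by rewrite /e; field.
have h1 : 0 <= 1 - (s + q) / 2 by lra.
have p1 : 0 <= e * (1 - (s + q) / 2) by apply: mulr_ge0.
split.
  apply/andP; split.
    have : 0 <= (s - q) * (s + q) by apply: mulr_ge0; lra.
    rewrite !expr2; nra.
  have := p1; rewrite -hq; lra.
rewrite hq.
have ns0 : 0 <= n%:R * s by apply: mulr_ge0.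
have h2 : e * (1 - (s + q) / 2) <= e * (1 - s / 2).
  apply: ler_wpM2l => //; lra.
have h3 : 0 <= 1 + (n%:R + 1) * s / 2 by nra.
apply: le_trans (ler_wpM2r h3 h2) _.
have h4 : e * (1 - s / 2) * (1 + (n%:R + 1) * s / 2) = e * (1 + n%:R * s / 2) - e * (s * s * (n%:R + 1) / 4).
  by field.
rewrite h4.
have : 0 <= e * (s * s * (n%:R + 1) / 4).
  apply: mulr_ge0 => //; apply: mulr_ge0 => //; apply: mulr_ge0; [apply: mulr_ge0 => //|lra].
move=> h5; move: H h5; rewrite /e; lra.
Qed.

Section S.
Variable R : realType.

Lemma Ccompact (D : set R) (L : R) : compact D -> compact (D `&` [set x | `|x| <= L]).
Proof.
move=> cD; apply: compact_closedI => //.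
have -> : [set x : R | `|x| <= L] = (fun x : R => `|x|) @^-1` [set x | x <= L] by [].
apply: closed_comp; last exact: closed_le.
move=> x _; exact: norm_continuous.
Qed.

Lemma open_fin (v : nat -> R) (r : R) (N : nat) :
  open ([set x | forall n, (n < N)%N -> `|v n - x n| < r] : set (PT R)).
Proof.
elim: N => [|N IH].
  have -> : [set x : PT R | forall n, (n < 0)%N -> `|v n - x n| < r] = setT.
    by apply/seteqP; split => x //= _ n.
  exact: openT.
have -> : [set x : PT R | forall n, (n < N.+1)%N -> `|v n - x n| < r] =
   [set x : PT R | forall n, (n < N)%N -> `|v n - x n| < r] `&` ((fun f : PT R => f N) @^-1` ball (v N) r).
  apply/seteqP; split => x /=.
    move=> H; split; first by move=> n Hn; apply: H; lia.
    exact: H.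
  move=> [H1 H2] n; rewrite ltnS leq_eqVlt => /orP[/eqP->|Hn]; [exact: H2|exact: H1].
apply: openI => //; apply: open_comp; last exact: ball_open.
move=> x _; exact: proj_cont.
Qed.

Variables (D : set R) (L : R) (w : nat -> R).
Hypothesis cD : compact D.
Hypothesis L0 : 0 < L.
Hypothesis nw : null_sequence w.
Local Notation K := (in_Kneg D L).

Lemma w_mono (N n : nat) : (N <= n)%N -> w n <= w N.
Proof.
case: nw => _ Hd _; elim: n => [|n IH]; first by rewrite leqn0 => /eqP->.
rewrite leq_eqVlt => /orP[/eqP<-//|]; rewrite ltnS => /IH; exact: le_trans (Hd n).
Qed.

Lemma w_pos n : 0 < w n.
Proof. by case: nw => H _ _; case/andP: (H n). Qed.

Lemma w_le1 n : w n <= 1.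
Proof. by case: nw => H _ _; case/andP: (H n). Qed.

Lemma wnorm_small v x N r : K v -> K x -> 2 * L * w N <= r ->
  (forall n, (n < N)%N -> `|v n - x n| < r) -> wnorm w (fun n => v n - x n) <= r.
Proof.
move=> Kv Kx HN Hlt; apply: ge_sup; first by exists (`|v 0%N - x 0%N| * w 0%N), 0%N.
move=> _ [n _ <-] /=.
have wn0 := w_pos n; have wn1 := w_le1 n.
case: (ltnP n N) => Hn.
  have h1 := Hlt n Hn; have h2 := normr_ge0 (v n - x n).
  have h3 : 0 <= `|v n - x n| * (1 - w n) by apply: mulr_ge0; lra.
  rewrite mulrBr mulr1 subr_ge0 in h3; exact: le_trans h3 (ltW h1).
have wnN := w_mono N n Hn.
have Hv := (Kv n).2; have Hx := (Kx n).2.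
have : `|v n - x n| <= 2 * L.
  apply: le_trans (ler_normB _ _) _; lra.
move=> h1.
have h3 : 0 <= (2 * L - `|v n - x n|) * w n by apply: mulr_ge0; lra.
have h4 : 0 <= 2 * L * (w N - w n).
  apply: mulr_ge0; [have := L0; lra | by rewrite subr_ge0].
rewrite mulrBr subr_ge0 in h4; rewrite mulrBl subr_ge0 in h3.
exact: le_trans h3 (le_trans h4 HN).
Qed.

Lemma w_small e : 0 < e -> exists N, 2 * L * w N <= e.
Proof.
move=> e0; case: nw => _ _ /cvgrPdist_le /(_ (e / (2 * L))).
have : 0 < e / (2 * L) by rewrite divr_gt0 // mulr_gt0.
move=> h /(_ h) [N _ HN]; exists N.
have := HN N (leqnn N); rewrite sub0r normrN ger0_norm; last exact: ltW (w_pos N).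
have L0' := L0.
rewrite ler_pdivlMr; last lra.
lra.
Qed.

Lemma Kcover (U : (nat -> R) -> set (nat -> R)) :
  (forall v, K v -> exists2 d, 0 < d & forall v', K v' -> wnorm w (fun n => v n - v' n) < d -> U v v') ->
  exists s : seq (nat -> R), (forall v, v \in s -> K v) /\ (forall x, K x -> exists2 v, v \in s & U v x).
Proof.
move=> HU.
have [d Hd] : exists d : (nat -> R) -> R, forall v, K v -> 0 < d v /\
   forall v', K v' -> wnorm w (fun n => v n - v' n) < d v -> U v v'.
  have : forall v, exists dv : R, K v -> 0 < dv /\
   forall v', K v' -> wnorm w (fun n => v n - v' n) < dv -> U v v'.
    move=> v; case: (pselect (K v)) => Kv; last by exists 1.
    by have [dv ??] := HU v Kv; exists dv.
  by case/choice => f Hf; exists f.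
have [N HN] : exists N : (nat -> R) -> nat, forall v, K v -> 2 * L * w (N v) <= d v / 2.
  have : forall v, exists Nv, K v -> 2 * L * w Nv <= d v / 2.
    move=> v; case: (pselect (K v)) => Kv; last by exists 0%N.
    have [Nv ?] := w_small (d v / 2) ltac:(have := (Hd v Kv).1; lra).
    by exists Nv.
  by case/choice => f Hf; exists f.
pose O v := ([set x | forall n, (n < N v)%N -> `|v n - x n| < d v / 2] : set (nat -> R)).
have KE : K = [set v | forall n, (D `&` [set x | `|x| <= L]) (v n)] by [].
have := @Kcompact R _ (@Ccompact D L cD); rewrite -KE (@compact_cover (PT R)) => /(_ _ K O).
case.
- move=> v _; exact: open_fin.
- move=> v Kv; exists v => //=; move=> n _; rewrite subrr normr0; have := (Hd v Kv).1; lra.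
move=> D' HD' Hcov; exists (finmap.enum_fset D'); split.
  by move=> v /HD'; rewrite inE.
move=> x Kx; have [v /= vD' Ov] := Hcov x Kx.
exists v => //.
have Kv : K v by move: (HD' v vD'); rewrite inE.
apply: (Hd v Kv).2 => //.
apply: (le_lt_trans (@wnorm_small _ _ _ _ Kv Kx (HN v Kv) Ov)).
have := (Hd v Kv).1; lra.
Qed.

Lemma le_sum_seq (T : eqType) (s : seq T) (F : T -> R) x :
  (forall y, 0 <= F y) -> x \in s -> F x <= \sum_(y <- s) F y.
Proof.
elim: s => // a s IH F0; rewrite in_cons big_cons => /orP[/eqP->|xs].
  by rewrite lerDl sumr_ge0.
by apply: le_trans (IH F0 xs) _; rewrite lerDr F0.
Qed.

Definition wc (f : (nat -> R) -> R) := w_continuous D L w f.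

Lemma wc_add f g : wc f -> wc g -> wc (fun v => f v + g v).
Proof.
move=> cf cg v Kv e e0.
have e2 : 0 < e / 2 by rewrite divr_gt0.
have [d1 d10 H1] := cf v Kv _ e2.
have [d2 d20 H2] := cg v Kv _ e2.
exists (Num.min d1 d2); first by rewrite lt_min d10 d20.
move=> v' Kv'; rewrite lt_min => /andP[w1 w2].
have h1 := H1 v' Kv' w1; have h2 := H2 v' Kv' w2.
have -> : f v + g v - (f v' + g v') = (f v - f v') + (g v - g v') by ring.
apply: le_lt_trans (ler_normD _ _) _; lra.
Qed.

Lemma wc_scale (c : R) f : wc f -> wc (fun v => c * f v).
Proof.
move=> cf v Kv e e0.
have c1 : 0 < `|c| + 1 by have := normr_ge0 c; lra.
have e2 : 0 < e / (`|c| + 1) by rewrite divr_gt0.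
have [d d0 H] := cf v Kv _ e2.
exists d => // v' Kv' /(H v' Kv') h.
rewrite -mulrBr normrM.
have h1 : `|c| * `|f v - f v'| <= `|c| * (e / (`|c| + 1)) by apply: ler_wpM2l => //; exact: ltW.
have h2 : `|c| * (e / (`|c| + 1)) = e - e / (`|c| + 1) by field; lra.
lra.
Qed.

Lemma wc_abs f : wc f -> wc (fun v => `|f v|).
Proof.
move=> cf v Kv e e0; have [d d0 H] := cf v Kv _ e0.
exists d => // v' Kv' /(H v' Kv') h.
exact: le_lt_trans (ler_dist_dist _ _) h.
Qed.

Lemma wc_bound f : wc f -> exists B, 0 < B /\ forall v, K v -> `|f v| <= B.
Proof.
move=> cf.
have [s [_ Hs]] := @Kcover (fun v x => `|f v - f x| < 1) (fun v Kv => cf v Kv 1 ltr01).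
have S0 : 0 <= \sum_(y <- s) `|f y| by apply: sumr_ge0.
exists (1 + \sum_(y <- s) `|f y|); split; first lra.
move=> v Kv; have [y ys Hy] := Hs v Kv.
have hy := @le_sum_seq _ s (fun y => `|f y|) y (fun _ => normr_ge0 _) ys.
have : `|f v| <= `|f y| + `|f y - f v|.
  have := ler_normB (f y) (f y - f v).
  by rewrite opprB addrC subrK.
lra.
Qed.

Variable A : set ((nat -> R) -> R).
Hypothesis Aadd : forall F G, A F -> A G -> A (fun v => F v + G v).
Hypothesis Ascale : forall (c : R) F, A F -> A (fun v => c * F v).
Hypothesis Amul : forall F G, A F -> A G -> A (fun v => F v * G v).
Hypothesis Aconst : forall c : R, A (fun _ => c).
Hypothesis Asep : forall v1 v2, K v1 -> K v2 -> v1 <> v2 -> exists2 F, A F & F v1 <> F v2.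
Hypothesis Awc : forall F, A F -> wc F.

Definition approx f := forall e, 0 < e -> exists2 g, A g & forall v, K v -> `|f v - g v| <= e.

Lemma qseq_err (s : R) n : 0 <= s <= 1 ->
  0 <= s - qseq (s ^+ 2) n /\ (s - qseq (s ^+ 2) n) * n%:R <= 2.
Proof.
move=> hs; have /= [/andP[q0 qs] H] := @qseq_inv R s n hs.
move: q0 qs H; set q := qseq (s ^+ 2) n => q0 qs H.
case/andP: hs => s0 s1.
split; first lra.
have n0 : 0 <= n%:R :> R by [].
case: (eqVneq s 0) => [s_0|sn0].
  have -> : s - q = 0 by lra.
  by rewrite mul0r.
have sp : 0 < s by rewrite lt_def sn0 s0.
nra.
Qed.

Lemma absA f : A f -> approx (fun v => `|f v|).
Proof.
move=> Af e e0.
have [B [B0 HB]] := wc_bound f (Awc _ Af).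
pose X := fun v => (B ^+ 2)^-1 * (f v * f v).
have AX : A X by apply: Ascale; apply: Amul.
have Aq : forall n, A (fun v => qseq (X v) n).
  elim=> [|n IH]; first exact: (Aconst 0).
  have -> : (fun v => qseq (X v) n.+1) =
     (fun v => qseq (X v) n + 2^-1 * (X v + (-1) * (qseq (X v) n * qseq (X v) n))).
    apply: funext => v; rewrite /qseq /=; ring.
  apply: Aadd => //; apply: Ascale; apply: Aadd => //; apply: Ascale; exact: Amul.
pose n := (Num.Def.trunc (2 * B / e)).+1.
have hn : 2 * B / e < n%:R by exact: truncnS_gt.
exists (fun v => B * qseq (X v) n); first exact: Ascale.
move=> v Kv.
have Bn0 : B != 0 by rewrite gt_eqF.
pose s := `|f v| / B.
have hs : 0 <= s <= 1.
  apply/andP; split; first by rewrite divr_ge0 // ltW.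
  by rewrite ler_pdivrMr // mul1r HB.
have Xs : X v = s ^+ 2.
  rewrite /X /s expr_div_n real_normK ?num_real // expr2; by field.
have [e1 e2] := @qseq_err s n hs.
rewrite Xs.
have -> : `|f v| - B * qseq (s ^+ 2) n = B * (s - qseq (s ^+ 2) n).
  rewrite /s; by field.
rewrite ger0_norm; last by apply: mulr_ge0 => //; exact: ltW.
move: e1 e2; set t := s - qseq (s ^+ 2) n => e1 e2.
have hn' : 2 * B < n%:R * e by rewrite -ltr_pdivrMr.
have np : 0 < n%:R :> R by rewrite ltr0n.
nra.
Qed.

Lemma approxA f : A f -> approx f.
Proof. by move=> Af e e0; exists f => // v _; rewrite subrr normr0 ltW. Qed.

Lemma approx_add f g : approx f -> approx g -> approx (fun v => f v + g v).
Proof.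
move=> af ag e e0.
have e2 : 0 < e / 2 by rewrite divr_gt0.
have [f' Af' Hf] := af _ e2; have [g' Ag' Hg] := ag _ e2.
exists (fun v => f' v + g' v); first exact: Aadd.
move=> v Kv; have h1 := Hf v Kv; have h2 := Hg v Kv.
have -> : f v + g v - (f' v + g' v) = (f v - f' v) + (g v - g' v) by ring.
apply: le_trans (ler_normD _ _) _; lra.
Qed.

Lemma approx_scale (c : R) f : approx f -> approx (fun v => c * f v).
Proof.
move=> af e e0.
have c1 : 0 < `|c| + 1 by have := normr_ge0 c; lra.
have e2 : 0 < e / (`|c| + 1) by rewrite divr_gt0.
have [g Ag H] := af _ e2.
exists (fun v => c * g v); first exact: Ascale.
move=> v Kv; have h := H v Kv.
rewrite -mulrBr normrM.
have h1 : `|c| * `|f v - g v| <= `|c| * (e / (`|c| + 1)) by apply: ler_wpM2l.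
have h2 : `|c| * (e / (`|c| + 1)) = e - e / (`|c| + 1) by field; lra.
lra.
Qed.

Lemma approx_abs f : approx f -> approx (fun v => `|f v|).
Proof.
move=> af e e0.
have e2 : 0 < e / 2 by rewrite divr_gt0.
have [g Ag H] := af _ e2.
have [g' Ag' H'] := absA g Ag _ e2.
exists g' => // v Kv; have h1 := H v Kv; have h2 := H' v Kv.
have h3 := ler_dist_dist (f v) (g v).
have -> : `|f v| - g' v = (`|f v| - `|g v|) + (`|g v| - g' v) by ring.
apply: le_trans (ler_normD _ _) _; lra.
Qed.

Definition good f := approx f /\ wc f.

Lemma good_add f g : good f -> good g -> good (fun v => f v + g v).
Proof. by move=> [??] [??]; split; [apply: approx_add|apply: wc_add]. Qed.
Lemma good_scale c f : good f -> good (fun v => c * f v).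
Proof. by move=> [??]; split; [apply: approx_scale|apply: wc_scale]. Qed.
Lemma good_abs f : good f -> good (fun v => `|f v|).
Proof. by move=> [??]; split; [apply: approx_abs|apply: wc_abs]. Qed.
Lemma goodA f : A f -> good f.
Proof. by move=> Af; split; [apply: approxA|apply: Awc]. Qed.

Definition mn (f g : (nat -> R) -> R) := fun v => 2^-1 * ((f v + g v) + (-1) * `|f v + (-1) * g v|).
Definition mx (f g : (nat -> R) -> R) := fun v => 2^-1 * ((f v + g v) + `|f v + (-1) * g v|).

Lemma good_mn f g : good f -> good g -> good (mn f g).
Proof.
move=> gf gg; apply: good_scale; apply: good_add; first exact: good_add.
apply: good_scale; apply: good_abs; apply: good_add => //; exact: good_scale.
Qed.
Lemma good_mx f g : good f -> good g -> good (mx f g).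
Proof.
move=> gf gg; apply: good_scale; apply: good_add; first exact: good_add.
apply: good_abs; apply: good_add => //; exact: good_scale.
Qed.

Lemma mn_facts (a b : R) : let m := 2^-1 * ((a + b) + (-1) * `|a + (-1) * b|) in
  m <= a /\ m <= b /\ (a = b -> m = a).
Proof.
rewrite /= !mulN1r; case: (lerP 0 (a - b)) => h.
  rewrite ger0_norm //; split; [lra|split; [lra|move=> ->; lra]].
rewrite ltr0_norm //; split; [lra|split; [lra|move=> ->; lra]].
Qed.

Lemma mx_facts (a b c : R) : let m := 2^-1 * ((a + b) + `|a + (-1) * b|) in
  a <= m /\ b <= m /\ (a < c -> b < c -> m < c).
Proof.
rewrite /= !mulN1r; case: (lerP 0 (a - b)) => h.
  rewrite ger0_norm //; split; [lra|split; [lra|lra]].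
rewrite ltr0_norm //; split; [lra|split; [lra|lra]].
Qed.

Lemma interp F x y : K x -> K y -> exists2 h, A h & h x = F x /\ h y = F y.
Proof.
move=> Kx Ky; case: (pselect (x = y)) => [<-|nxy].
  by exists (fun _ => F x).
have [G AG GD] := Asep _ _ Kx Ky nxy.
have GD' : G y - G x != 0 by rewrite subr_eq0; apply/eqP => h; apply: GD.
exists (fun v => F x + (F y - F x) / (G y - G x) * (G v + (- G x))).
  apply: Aadd => //; apply: Ascale; exact: Aadd.
split; first by rewrite subrr mulr0 addr0.
by field.
Qed.

Lemma step2 F e x : wc F -> 0 < e -> K x ->
  exists2 g, good g & g x = F x /\ forall z, K z -> g z < F z + e.
Proof.
move=> cF e0 Kx.
have [h Hh] : exists h : (nat -> R) -> ((nat -> R) -> R),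
    forall y, K y -> A (h y) /\ h y x = F x /\ h y y = F y.
  have : forall y, exists hy : (nat -> R) -> R, K y -> A hy /\ hy x = F x /\ hy y = F y.
    move=> y; case: (pselect (K y)) => Ky; last by exists (fun _ => 0).
    by have [hy Ahy [? ?]] := @interp F x y Kx Ky; exists hy.
  by case/choice => f Hf; exists f.
have e2 : 0 < e / 2 by rewrite divr_gt0.
have [s [Ks Hs]] : exists s : seq (nat -> R), (forall v, v \in s -> K v) /\
    (forall z, K z -> exists2 y, y \in s & h y z < F z + e).
  apply: Kcover => y Ky; have [Ahy [_ hyy]] := Hh y Ky.
  have [d1 d10 H1] := Awc _ Ahy y Ky _ e2.
  have [d2 d20 H2] := cF y Ky _ e2.
  exists (Num.min d1 d2); first by rewrite lt_min d10 d20.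
  move=> z Kz; rewrite lt_min => /andP[w1 w2].
  have := H1 z Kz w1; have := H2 z Kz w2; rewrite hyy !ltr_norml => /andP[a1 a2] /andP[b1 b2].
  lra.
pose g := foldr (fun y acc => mn (h y) acc) (h x) s.
exists g.
  rewrite /g; have gx := goodA _ (Hh x Kx).1.
  elim: s Ks {Hs g} => //= a s IH Ks; apply: good_mn.
    by apply: goodA; apply: (Hh a (Ks a _)).1; rewrite in_cons eqxx.
  by apply: IH => v vs; apply: Ks; rewrite in_cons vs orbT.
split.
  rewrite /g; elim: s Ks {Hs g} => //= [|a s IH Ks]; first by have [_ []] := Hh x Kx.
  have Ka : K a by apply: Ks; rewrite in_cons eqxx.
  have IH' : foldr (fun y acc => mn (h y) acc) (h x) s x = F x.
    by apply: IH => v vs; apply: Ks; rewrite in_cons vs orbT.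
  have [_ [_ E]] := mn_facts (h a x) (foldr (fun y acc => mn (h y) acc) (h x) s x).
  have hax : h a x = F x by have [_ []] := Hh a Ka.
  by rewrite /mn E ?hax // IH'.
move=> z Kz; have [y ys Hy] := Hs z Kz.
apply: le_lt_trans Hy.
rewrite /g; elim: s ys {Ks Hs g} => //= a s IH; rewrite in_cons => /orP[/eqP<-|ys].
  by have [E _] := mn_facts (h y z) (foldr (fun y acc => mn (h y) acc) (h x) s z).
have [_ [E _]] := mn_facts (h a z) (foldr (fun y acc => mn (h y) acc) (h x) s z).
exact: le_trans E (IH ys).
Qed.

Lemma SW F : wc F -> approx F.
Proof.
move=> cF e e0.
have e2 : 0 < e / 2 by rewrite divr_gt0.
have [g Hg] : exists g : (nat -> R) -> ((nat -> R) -> R), forall x, K x ->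
    good (g x) /\ g x x = F x /\ forall z, K z -> g x z < F z + e / 2.
  have : forall x, exists gx, K x -> good gx /\ gx x = F x /\ forall z, K z -> gx z < F z + e / 2.
    move=> x; case: (pselect (K x)) => Kx; last by exists (fun _ => 0).
    by have [gx ? [? ?]] := @step2 F _ x cF e2 Kx; exists gx.
  by case/choice => f Hf; exists f.
have [s [Ks Hs]] : exists s : seq (nat -> R), (forall v, v \in s -> K v) /\
    (forall z, K z -> exists2 y, y \in s & F z - e / 2 < g y z).
  apply: Kcover => x Kx; have [[_ cg] [gxx _]] := Hg x Kx.
  have e4 : 0 < e / 4 by rewrite divr_gt0.
  have [d1 d10 H1] := cg x Kx _ e4.
  have [d2 d20 H2] := cF x Kx _ e4.
  exists (Num.min d1 d2); first by rewrite lt_min d10 d20.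
  move=> z Kz; rewrite lt_min => /andP[w1 w2].
  have := H1 z Kz w1; have := H2 z Kz w2; rewrite gxx !ltr_norml => /andP[a1 a2] /andP[b1 b2].
  lra.
case: s Ks Hs => [|x0 s] Ks Hs.
  exists (fun _ => 0); first exact: Aconst.
  by move=> z Kz; have [y] := Hs z Kz.
pose G := foldr (fun y acc => mx (g y) acc) (g x0) s.
have Kx0 : K x0 by apply: Ks; rewrite in_cons eqxx.
have KS : forall v, v \in s -> K v by move=> v vs; apply: Ks; rewrite in_cons vs orbT.
have gG : good G.
  rewrite /G; have gx := (Hg x0 Kx0).1.
  elim: s KS {Ks Hs G} => //= a s IH KS; apply: good_mx.
    by apply: (Hg a (KS a _)).1; rewrite in_cons eqxx.
  by apply: IH => v vs; apply: KS; rewrite in_cons vs orbT.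
have Gup : forall z, K z -> G z < F z + e / 2.
  move=> z Kz; rewrite /G; elim: s KS {Ks Hs G gG} => //= [|a s IH KS].
    by move=> _; have [_ [_ ]] := Hg x0 Kx0; apply.
  have Ka : K a by apply: KS; rewrite in_cons eqxx.
  have IH' : foldr (fun y acc => mx (g y) acc) (g x0) s z < F z + e / 2.
    by apply: IH => v vs; apply: KS; rewrite in_cons vs orbT.
  have [_ [_ E]] := mx_facts (g a z) (foldr (fun y acc => mx (g y) acc) (g x0) s z) (F z + e / 2).
  apply: E IH'; by have [_ [_ ]] := Hg a Ka; apply.
have Glo : forall z, K z -> F z - e / 2 < G z.
  move=> z Kz; have [y ys Hy] := Hs z Kz; apply: (lt_le_trans Hy).
  rewrite /G; move: ys; rewrite in_cons => /orP[/eqP->|].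
    elim: s {KS Ks Hs G gG Gup} => //= a s IH.
    have [_ [E _]] := mx_facts (g a z) (foldr (fun y acc => mx (g y) acc) (g x0) s z) 0.
    exact: le_trans IH E.
  elim: s {KS Ks Hs G gG Gup} => //= a s IH; rewrite in_cons => /orP[/eqP<-|ys].
    by have [E _] := mx_facts (g y z) (foldr (fun y acc => mx (g y) acc) (g x0) s z) 0.
  have [_ [E _]] := mx_facts (g a z) (foldr (fun y acc => mx (g y) acc) (g x0) s z) 0.
  exact: le_trans (IH ys) E.
have [a Aa Ha] := gG.1 _ e2.
exists a => // z Kz; have h1 := Ha z Kz; have h2 := Gup z Kz; have h3 := Glo z Kz.
have -> : F z - a z = (F z - G z) + (G z - a z) by ring.
apply: le_trans (ler_normD _ _) _.
have : `|F z - G z| <= e / 2 by rewrite ler_norml; apply/andP; split; lra.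
lra.
Qed.

End S.

Theorem theorem3 (R : realType) (L : R) (D : set R) (w : nat -> R)
    (Mw : set (filterR R)) :
  0 < L -> compact D -> null_sequence w ->
  (forall M, Mw M -> exists (n : nat) (T : R -> 'M[R[i]]_(2 ^ n) -> 'M[R[i]]_(2 ^ n))
                           (h : 'M[R[i]]_(2 ^ n) -> R),
      [/\ convergent D L T, induced_filter D L T h M & w_fading_memory D L w M]) ->
  (forall F G, functionals_of D L Mw F -> functionals_of D L Mw G ->
     functionals_of D L Mw (fun v => F v + G v)) ->
  (forall (c : R) F, functionals_of D L Mw F -> functionals_of D L Mw (fun v => c * F v)) ->
  (forall F G, functionals_of D L Mw F -> functionals_of D L Mw G ->
     functionals_of D L Mw (fun v => F v * G v)) ->
  (forall c : R, functionals_of D L Mw (fun _ => c)) ->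
  (forall v1 v2, in_Kneg D L v1 -> in_Kneg D L v2 -> v1 <> v2 ->
     exists2 F, functionals_of D L Mw F & F v1 <> F v2) ->
  forall (Mstar : filterR R) (eps : R), w_fading_memory D L w Mstar -> 0 < eps ->
  exists2 M, Mw M &
    forall u, in_K D L u ->
      exists2 e : R, e < eps & forall k : int, `|Mstar u k - M u k| <= e.
Proof.
move=> L0 cD nw Hmw Hadd Hscale Hmul Hconst Hsep Mstar eps Wstar eps0.
have WC := Wstar; case: WC => _ _ WC.
have Awc : forall F, functionals_of D L Mw F -> wc R D L w F.
  move=> F [M MM HF]; have [n [T [h [_ _ [_ _ WCM]]]]] := Hmw M MM.
  move=> v Kv e e0; have [d d0 Hd] := WCM v Kv e e0; exists d => // v' Kv' hw.
  rewrite !HF //; exact: Hd.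
have e2 : 0 < eps / 2 by rewrite divr_gt0.
have [a Aa Ha] := @SW R D L w cD L0 nw _ Hadd Hscale Hmul Hconst Hsep Awc _ WC _ e2.
case: Aa => M MM HM.
exists M => // u Ku.
exists (eps / 2); first lra.
move=> k.
pose vk := fun n : nat => u (k - n%:Z).
have Kvk : in_Kneg D L vk by move=> n; apply: Ku.
have key : forall M', w_fading_memory D L w M' -> M' u k = functional M' vk.
  move=> M' [TI' CA' _].
  have -> : M' u k = M' (Defs.shift (- k) u) 0.
    by rewrite (TI' u Ku (- k) 0) /Defs.shift sub0r opprK.
  rewrite /functional; apply: CA'.
  - by move=> j; apply: Ku.
  - by move=> j; rewrite /extZ; case: ifP => _; apply: Kvk.
  - move=> j j0; rewrite /Defs.shift /extZ /vk j0; congr u.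
    rewrite abszE ler0_norm //; ring.
have [n [T [h [_ _ WM]]]] := Hmw M MM.
rewrite (key Mstar) // (key M) // -HM //.
exact: Ha.
Qed.
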